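(* Let $L$ be a lattice that has no doubly reducible elements, and let $a_1,a_2,a_3,b_1,b_2,b_3$ be six distinct elements of $L$ such that $a_1<a_2<a_3$, $b_1<b_2<b_3$, $a_1<b_3$ and $b_1<a_3$. Assume moreover that $a_2\parallel b_i$ for all $1\le i\le 3$, that $a_i\parallel b_2$ for all $1\le i\le 3$, that $a_2\vee b_2=a_3\vee b_3$, and that $a_2\wedge b_2=a_1\wedge b_1$. Then $L$ has a sublattice isomorphic to $L_{15}$.
   Context: For elements $x,y$ of a poset, $x\parallel y$ means that neither $x\le y$ nor $y\le x$. An element $x$ of a lattice $L$ is doubly reducible if there exist $x_1,x_2,x_3,x_4\in L$ with $x_1\parallel x_2$, $x_3\parallel x_4$, and $x=x_1\vee x_2=x_3\wedge x_4$. The lattice $L_{15}$ is the ten-element lattice with elements $0,u,v,p,q,s,t,1,g,h$ whose Hasse diagram has exactly the covering relations $0\prec u$, $0\prec v$, $u\prec p$, $v\prec p$, $p\prec q$, $q\prec s$, $q\prec t$, $s\prec 1$, $t\prec 1$, $u\prec g$, $g\prec s$, $v\prec h$, $h\prec t$ (so $p=u\vee v$, $q=s\wedge t$, and $g$ lies strictly between $u$ and $s$, $h$ strictly between $v$ and $t$). *)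

(* Defs.v *)
From HB Require Import structures.
From mathcomp Require Import all_boot all_order.
From Stdlib Require Import Relations.Relation_Operators.
Set Implicit Arguments. Unset Strict Implicit. Unset Printing Implicit Defensive.
Import Order.TTheory.
Local Open Scope order_scope.

Definition doubly_reducible {d : Order.disp_t} {L : latticeType d} (x : L) : Prop :=
  exists x1 x2 x3 x4 : L,
    [/\ x1 >< x2, x3 >< x4, x = x1 `|` x2 & x = x3 `&` x4].

Inductive L15 : Type :=
  | L15_0 | L15_u | L15_v | L15_p | L15_q | L15_s | L15_t | L15_1 | L15_g | L15_h.

Definition cover15 (x y : L15) : Prop :=
  match x, y with
  | L15_0, L15_u | L15_0, L15_v
  | L15_u, L15_p | L15_v, L15_p
  | L15_p, L15_q
  | L15_q, L15_s | L15_q, L15_t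
  | L15_s, L15_1 | L15_t, L15_1
  | L15_u, L15_g | L15_g, L15_s
  | L15_v, L15_h | L15_h, L15_t => True
  | _, _ => False
  end.

Definition le15 : L15 -> L15 -> Prop := clos_refl_trans L15 cover15.

Definition has_L15_sublattice {d : Order.disp_t} (L : latticeType d) : Prop :=
  exists f : L15 -> L,
    [/\ injective f,
        (forall x y, le15 x y <-> f x <= f y),
        (forall x y, exists z, f z = f x `&` f y) &
        (forall x y, exists z, f z = f x `|` f y)].

(* Main.v *)
Require Import Defs.
From HB Require Import structures.
From mathcomp Require Import all_boot all_order.
From Stdlib Require Import Relations.Relation_Operators.
Import Order.TTheory.
Local Open Scope order_scope.

Definition le15b (x y : L15) : bool :=
 match x, y with
 | L15_0, _ => true
 | _, L15_1 => true
 | L15_u, (L15_u|L15_p|L15_q|L15_s|L15_t|L15_g) => true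
 | L15_v, (L15_v|L15_p|L15_q|L15_s|L15_t|L15_h) => true
 | L15_p, (L15_p|L15_q|L15_s|L15_t) => true
 | L15_q, (L15_q|L15_s|L15_t) => true
 | L15_s, L15_s | L15_t, L15_t => true
 | L15_g, (L15_g|L15_s) => true
 | L15_h, (L15_h|L15_t) => true
 | _, _ => false end.

Definition bad15 (j m : L15) : bool :=
 match j, m with
 | L15_u, L15_h | L15_v, L15_g
 | L15_g, (L15_t|L15_h|L15_p)
 | L15_h, (L15_s|L15_g|L15_p)
 | L15_q, (L15_g|L15_h|L15_p) => true
 | _, _ => false end.

Lemma le15b_trans x y z : le15b x y -> le15b y z -> le15b x z.
Proof. by case: x; case: y; case: z. Qed.

Lemma le15_b x y : le15 x y -> le15b x y.
Proof.
elim=> [a b H | a | a b c _ H1 _ H2].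
- by move: H; case: a; case: b.
- by case: a.
- exact: le15b_trans H1 H2.
Qed.

Ltac path15 :=
  first [ apply rt_refl | (apply rt_step; exact I)
        | (apply rt_trans with L15_u; [apply rt_step; exact I | path15])
        | (apply rt_trans with L15_v; [apply rt_step; exact I | path15])
        | (apply rt_trans with L15_p; [apply rt_step; exact I | path15])
        | (apply rt_trans with L15_q; [apply rt_step; exact I | path15])
        | (apply rt_trans with L15_s; [apply rt_step; exact I | path15])
        | (apply rt_trans with L15_t; [apply rt_step; exact I | path15])
        | (apply rt_trans with L15_g; [apply rt_step; exact I | path15])
        | (apply rt_trans with L15_h; [apply rt_step; exact I | path15]) ].

Lemma b_le15 x y : le15b x y -> le15 x y.
Proof. rewrite /le15; case: x; case: y => //= _; path15. Qed.

Ltac wit15 :=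
  first [ (exists L15_u, L15_h; done) | (exists L15_v, L15_g; done)
        | (exists L15_g, L15_t; done) | (exists L15_g, L15_h; done)
        | (exists L15_g, L15_p; done) | (exists L15_h, L15_s; done)
        | (exists L15_h, L15_g; done) | (exists L15_h, L15_p; done)
        | (exists L15_q, L15_g; done) | (exists L15_q, L15_h; done)
        | (exists L15_q, L15_p; done) ].

Lemma witness15 x y : le15b x y = false ->
  exists j m, [&& le15b j x, le15b y m & bad15 j m].
Proof. case: x; case: y => //= _; wit15. Qed.

Theorem lemma3p1 (d : Order.disp_t) (L : latticeType d)
    (a1 a2 a3 b1 b2 b3 : L) :
  (forall x : L, ~ doubly_reducible x) ->
  uniq [:: a1; a2; a3; b1; b2; b3] ->
  a1 < a2 -> a2 < a3 -> b1 < b2 -> b2 < b3 -> a1 < b3 -> b1 < a3 ->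
  a2 >< b1 -> a2 >< b2 -> a2 >< b3 ->
  a1 >< b2 -> a3 >< b2 ->
  a2 `|` b2 = a3 `|` b3 ->
  a2 `&` b2 = a1 `&` b1 ->
  has_L15_sublattice L.
Proof.
move=> ndr _ /ltW l12 /ltW l23 /ltW m12 /ltW m23 /ltW l1m3 /ltW m1l3
  n21 n22 n23 n12 n32 ej em.
have nc : forall x y : L, x >< y -> x <= y -> False.
  by move=> x y; rewrite /Order.comparable => H H'; rewrite H' in H.
have nc' : forall x y : L, x >< y -> y <= x -> False.
  by move=> x y; rewrite /Order.comparable => H H'; rewrite H' orbT in H.
set o := a2 `&` b2. set i := a2 `|` b2.
set U := a2 `&` b3. set V := b2 `&` a3.
set S := a2 `|` V. set T := b2 `|` U.
set P := U `|` V. set Q := S `&` T.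
have oa1 : o <= a1 by rewrite /o em leIl.
have ob1 : o <= b1 by rewrite /o em leIr.
have a1U : a1 <= U by rewrite lexI l1m3 (le_trans l12) ?lexx.
have b1V : b1 <= V by rewrite lexI m1l3 (le_trans m12) ?lexx.
have Ua2 : U <= a2 by exact: leIl.
have Ub3 : U <= b3 by exact: leIr.
have Vb2 : V <= b2 by exact: leIl.
have Va3 : V <= a3 by exact: leIr.
have a2S : a2 <= S by exact: leUl.
have VS : V <= S by exact: leUr.
have Sa3 : S <= a3 by rewrite leUx l23 Va3.
have b2T : b2 <= T by exact: leUl.
have UT : U <= T by exact: leUr.
have Tb3 : T <= b3 by rewrite leUx m23 Ub3.
have US : U <= S := le_trans Ua2 a2S.
have VT : V <= T := le_trans Vb2 b2T.
have PS : P <= S by rewrite leUx US VS.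
have PT : P <= T by rewrite leUx UT VT.
have PQ : P <= Q by rewrite lexI PS PT.
have UP : U <= P by exact: leUl.
have VP : V <= P by exact: leUr.
have oU : o <= U := le_trans oa1 a1U.
have oV : o <= V := le_trans ob1 b1V.
have ei : i = a3 `|` b3 by rewrite /i ej.
have Si : S <= i by rewrite ei (le_trans Sa3) ?leUl.
have Ti : T <= i by rewrite ei (le_trans Tb3) ?leUr.
have QS : Q <= S by exact: leIl.
have QT : Q <= T by exact: leIr.
pose f (x : L15) : L := match x with
  | L15_0 => o | L15_u => U | L15_v => V | L15_p => P | L15_q => Q
  | L15_s => S | L15_t => T | L15_1 => i | L15_g => a2 | L15_h => b2 end.
have fmono : forall x y, le15 x y -> f x <= f y.
  move=> x y; elim=> [a b H | a | a b c _ H1 _ H2].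
  - move: H; case: a; case: b => //= _.
  - by rewrite lexx.
  - exact: le_trans H1 H2.
have bad : forall j m, bad15 j m -> f j <= f m -> False.
  case; case => //= _ H.
  - exact: nc a1 b2 n12 (le_trans a1U H).
  - exact: nc' a2 b1 n21 (le_trans b1V H).
  - have PQe : P = Q by apply/le_anti; rewrite PQ H.
    apply: (ndr P); exists U, V, S, T; split; last first.
    + by rewrite PQe.
    + by [].
    + rewrite /Order.comparable; apply/norP; split; apply/negP => H'.
      * exact: nc a2 b3 n23 (le_trans a2S (le_trans H' Tb3)).
      * exact: nc' a3 b2 n32 (le_trans b2T (le_trans H' Sa3)).
    + rewrite /Order.comparable; apply/norP; split; apply/negP => H'.
      * exact: nc a1 b2 n12 (le_trans a1U (le_trans H' Vb2)).
      * exact: nc' a2 b1 n21 (le_trans b1V (le_trans H' Ua2)).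
  - exact: nc' a2 b1 n21 (le_trans b1V (le_trans VP (le_trans PQ H))).
  - exact: nc a1 b2 n12 (le_trans a1U (le_trans UP (le_trans PQ H))).
  - exact: nc a2 b3 n23 (le_trans H (le_trans PT Tb3)).
  - exact: nc a2 b3 n23 (le_trans H Tb3).
  - exact: nc a2 b2 n22 H.
  - exact: nc' a3 b2 n32 (le_trans H (le_trans PS Sa3)).
  - exact: nc' a3 b2 n32 (le_trans H Sa3).
  - exact: nc' a2 b2 n22 H.
have iso : forall x y, le15 x y <-> f x <= f y.
  move=> x y; split; first exact: fmono.
  move=> H; apply: b_le15; case E: (le15b x y) => //; exfalso.
  case: (witness15 x y E) => j [m /and3P [jx ym bjm]].
  apply: (bad j m bjm).
  exact: le_trans (fmono _ _ (b_le15 _ _ jx)) (le_trans H (fmono _ _ (b_le15 _ _ ym))).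
have mUV : U `&` V = o.
  by apply/le_anti/andP; split; [exact: leI2 Ua2 Vb2 | rewrite lexI oU oV].
have mUh : U `&` b2 = o.
  apply/le_anti/andP; split; first exact: leI2 Ua2 (lexx b2).
  by rewrite lexI oU leIr.
have mVg : V `&` a2 = o.
  rewrite meetC; apply/le_anti/andP; split; first exact: leI2 (lexx a2) Vb2.
  by rewrite lexI oV leIl.
have mgP : a2 `&` P = U.
  apply/le_anti/andP; split; first exact: leI2 (lexx a2) (le_trans PT Tb3).
  by rewrite lexI Ua2 UP.
have mgQ : a2 `&` Q = U.
  apply/le_anti/andP; split; first exact: leI2 (lexx a2) (le_trans QT Tb3).
  by rewrite lexI Ua2 (le_trans UP PQ).
have mgT : a2 `&` T = U.
  apply/le_anti/andP; split; first exact: leI2 (lexx a2) Tb3.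
  by rewrite lexI Ua2 UT.
have mhP : b2 `&` P = V.
  apply/le_anti/andP; split; first exact: leI2 (lexx b2) (le_trans PS Sa3).
  by rewrite lexI Vb2 VP.
have mhQ : b2 `&` Q = V.
  apply/le_anti/andP; split; first exact: leI2 (lexx b2) (le_trans QS Sa3).
  by rewrite lexI Vb2 (le_trans VP PQ).
have mhS : b2 `&` S = V.
  apply/le_anti/andP; split; first exact: leI2 (lexx b2) Sa3.
  by rewrite lexI Vb2 VS.
have jVg : V `|` a2 = S by rewrite joinC.
have jUh : U `|` b2 = T by rewrite joinC.
have jgP : a2 `|` P = S.
  apply/le_anti/andP; split; first by rewrite leUx a2S PS.
  exact: leU2 (lexx a2) VP.
have jgQ : a2 `|` Q = S.
  apply/le_anti/andP; split; first by rewrite leUx a2S QS.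
  exact: leU2 (lexx a2) (le_trans VP PQ).
have jgT : a2 `|` T = i.
  apply/le_anti/andP; split; first by rewrite ei; exact: leU2 l23 Tb3.
  rewrite /i; exact: leU2 (lexx a2) b2T.
have jhP : b2 `|` P = T.
  apply/le_anti/andP; split; first by rewrite leUx b2T PT.
  exact: leU2 (lexx b2) UP.
have jhQ : b2 `|` Q = T.
  apply/le_anti/andP; split; first by rewrite leUx b2T QT.
  exact: leU2 (lexx b2) (le_trans UP PQ).
have jhS : b2 `|` S = i.
  apply/le_anti/andP; split.
    by rewrite ei joinC; exact: leU2 Sa3 m23.
  by rewrite /i leUx leUl (le_trans a2S) ?leUr.
have jST : S `|` T = i.
  apply/le_anti/andP; split; first by rewrite ei; exact: leU2 Sa3 Tb3.
  rewrite /i; exact: leU2 a2S b2T.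
exists f; split => //.
- move=> x y E.
  have e1 : f x <= f y by rewrite E.
  have e2 : f y <= f x by rewrite E.
  have h1 := le15_b _ _ (proj2 (iso x y) e1).
  have h2 := le15_b _ _ (proj2 (iso y x) e2).
  by clear E e1 e2; move: h1 h2; case: x; case: y.
- move=> x y; case E1: (le15b x y).
    by exists x; apply/esym/meet_idPl; exact: fmono _ _ (b_le15 _ _ E1).
  case E2: (le15b y x).
    by exists y; apply/esym; rewrite meetC; apply/meet_idPl; exact: fmono _ _ (b_le15 _ _ E2).
  case: x E1 E2; case: y => //= _ _.
  + exists L15_0; rewrite /= mUV; reflexivity.
  + exists L15_0; rewrite /= mUh; reflexivity.
  + exists L15_0; rewrite /= meetC mUV; reflexivity.
  + exists L15_0; rewrite /= mVg; reflexivity.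
  + exists L15_u; rewrite /= meetC mgP; reflexivity.
  + exists L15_v; rewrite /= meetC mhP; reflexivity.
  + exists L15_u; rewrite /= meetC mgQ; reflexivity.
  + exists L15_v; rewrite /= meetC mhQ; reflexivity.
  + exists L15_q; reflexivity.
  + exists L15_v; rewrite /= meetC mhS; reflexivity.
  + exists L15_q; rewrite /= meetC; reflexivity.
  + exists L15_u; rewrite /= meetC mgT; reflexivity.
  + exists L15_0; rewrite /= meetC mVg; reflexivity.
  + exists L15_u; rewrite /= mgP; reflexivity.
  + exists L15_u; rewrite /= mgQ; reflexivity.
  + exists L15_u; rewrite /= mgT; reflexivity.
  + exists L15_0; reflexivity.
  + exists L15_0; rewrite /= meetC mUh; reflexivity.
  + exists L15_v; rewrite /= mhP; reflexivity.
  + exists L15_v; rewrite /= mhQ; reflexivity.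
  + exists L15_v; rewrite /= mhS; reflexivity.
  + exists L15_0; rewrite /= meetC; reflexivity.
- move=> x y; case E1: (le15b x y).
    by exists y; apply/esym; rewrite joinC; apply/join_idPl; exact: fmono _ _ (b_le15 _ _ E1).
  case E2: (le15b y x).
    by exists x; apply/esym/join_idPl; exact: fmono _ _ (b_le15 _ _ E2).
  case: x E1 E2; case: y => //= _ _.
  + exists L15_p; reflexivity.
  + exists L15_t; rewrite /= jUh; reflexivity.
  + exists L15_p; rewrite /= joinC; reflexivity.
  + exists L15_s; rewrite /= jVg; reflexivity.
  + exists L15_s; rewrite /= joinC jgP; reflexivity.
  + exists L15_t; rewrite /= joinC jhP; reflexivity.
  + exists L15_s; rewrite /= joinC jgQ; reflexivity.
  + exists L15_t; rewrite /= joinC jhQ; reflexivity.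
  + exists L15_1; rewrite /= jST; reflexivity.
  + exists L15_1; rewrite /= joinC jhS; reflexivity.
  + exists L15_1; rewrite /= joinC jST; reflexivity.
  + exists L15_1; rewrite /= joinC jgT; reflexivity.
  + exists L15_s; rewrite /= joinC jVg; reflexivity.
  + exists L15_s; rewrite /= jgP; reflexivity.
  + exists L15_s; rewrite /= jgQ; reflexivity.
  + exists L15_1; rewrite /= jgT; reflexivity.
  + exists L15_1; reflexivity.
  + exists L15_t; rewrite /= joinC jUh; reflexivity.
  + exists L15_t; rewrite /= jhP; reflexivity.
  + exists L15_t; rewrite /= jhQ; reflexivity.
  + exists L15_1; rewrite /= jhS; reflexivity.
  + exists L15_1; rewrite /= joinC; reflexivity.
Qed.
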